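(* Let $M$ be the spacetime with metric $$ds^2=-b^2(r)\,dt^2+f_1^2(r)\,dr^2+f_2^2(r)\,(d\theta^2+\sin^2\theta\,d\phi^2),$$ where $b,f_1,f_2$ are smooth positive functions of $r$ on an open interval. Let $u_k$ be the unit timelike covector with components $u_0=-b$, $u_r=u_\theta=u_\phi=0$, and let $\chi_k$ be the unit spacelike radial covector with components $\chi_r=f_1$, $\chi_0=\chi_\theta=\chi_\phi=0$. For smooth functions $\mathsf A(r),\mathsf B(r),\mathsf C(r)$ consider the symmetric tensor $$K_{kl}=\mathsf A(r)\,u_ku_l+\mathsf B(r)\,g_{kl}+\mathsf C(r)\,\chi_k\chi_l .$$ Then $K_{kl}$ is a divergence-free conformal Killing tensor if and only if there exist constants $\kappa_1,\kappa_2,\kappa_3$ such that $$\mathsf A=\kappa_2 f_2^2-2\kappa_3 b^2,\qquad \mathsf B=\kappa_1+2\kappa_2 f_2^2+\kappa_3 b^2,\qquad \mathsf C=-\kappa_2 f_2^2 .$$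
   Context: $\nabla$ is the Levi-Civita connection of $g$. A symmetric tensor $K_{kl}$ with trace $K=K^k{}_k$ is called a conformal Killing tensor (in the convention used here) if $\nabla_jK_{kl}+\nabla_kK_{jl}+\nabla_lK_{jk}=\tfrac16\left(g_{kl}\nabla_jK+g_{jl}\nabla_kK+g_{jk}\nabla_lK\right)$, and divergence-free if $\nabla^kK_{kl}=0$. *)

(* Defs.v *)
From Stdlib Require Import Reals.
From Coquelicot Require Import Coquelicot.
Open Scope R_scope.

(* A point of the coordinate chart: x 0 = t, x 1 = r, x 2 = theta, x 3 = phi. *)
Definition Point := nat -> R.

Definition sum4 (F : nat -> R) : R := F 0%nat + F 1%nat + F 2%nat + F 3%nat.

Definition upd (x : Point) (i : nat) (s : R) : Point :=
  fun j => if Nat.eqb j i then s else x j.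

Definition partial (i : nat) (F : Point -> R) (x : Point) : R :=
  Derive (fun s => F (upd x i s)) (x i).

Section Geometry.
Variables b f1 f2 : R -> R.

Definition gmet (i j : nat) (x : Point) : R :=
  if Nat.eqb i j then
    match i with
    | 0%nat => - (b (x 1%nat)) ^ 2
    | 1%nat => (f1 (x 1%nat)) ^ 2
    | 2%nat => (f2 (x 1%nat)) ^ 2
    | 3%nat => (f2 (x 1%nat)) ^ 2 * (sin (x 2%nat)) ^ 2
    | _ => 0
    end
  else 0.

Definition ginv (i j : nat) (x : Point) : R :=
  if Nat.eqb i j then
    match i with
    | 0%nat => - / (b (x 1%nat)) ^ 2
    | 1%nat => / (f1 (x 1%nat)) ^ 2
    | 2%nat => / (f2 (x 1%nat)) ^ 2
    | 3%nat => / ((f2 (x 1%nat)) ^ 2 * (sin (x 2%nat)) ^ 2)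
    | _ => 0
    end
  else 0.

Definition Gam (m i j : nat) (x : Point) : R :=
  / 2 * sum4 (fun l => ginv m l x *
     (partial i (gmet j l) x + partial j (gmet i l) x - partial l (gmet i j) x)).

Definition covD (K : nat -> nat -> Point -> R) (j k l : nat) (x : Point) : R :=
  partial j (K k l) x
  - sum4 (fun m => Gam m j k x * K m l x)
  - sum4 (fun m => Gam m j l x * K k m x).

Definition trK (K : nat -> nat -> Point -> R) (x : Point) : R :=
  sum4 (fun k => sum4 (fun l => ginv k l x * K k l x)).

Definition inI (a c : Rbar) (r : R) : Prop := Rbar_lt a r /\ Rbar_lt r c.
Definition inU (a c : Rbar) (x : Point) : Prop :=
  inI a c (x 1%nat) /\ 0 < x 2%nat < PI.

Definition conformal_Killing (a c : Rbar) (K : nat -> nat -> Point -> R) : Prop :=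
  forall x, inU a c x -> forall j k l, (j < 4)%nat -> (k < 4)%nat -> (l < 4)%nat ->
    covD K j k l x + covD K k j l x + covD K l j k x =
    / 6 * (gmet k l x * partial j (trK K) x + gmet j l x * partial k (trK K) x
           + gmet j k x * partial l (trK K) x).

Definition divergence_free (a c : Rbar) (K : nat -> nat -> Point -> R) : Prop :=
  forall x, inU a c x -> forall l, (l < 4)%nat ->
    sum4 (fun k => sum4 (fun j => ginv j k x * covD K j k l x)) = 0.

Definition ucov (i : nat) (x : Point) : R :=
  if Nat.eqb i 0 then - b (x 1%nat) else 0.
Definition chicov (i : nat) (x : Point) : R :=
  if Nat.eqb i 1 then f1 (x 1%nat) else 0.

Definition Ktensor (A B C : R -> R) (k l : nat) (x : Point) : R :=
  A (x 1%nat) * ucov k x * ucov l x + B (x 1%nat) * gmet k l x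
  + C (x 1%nat) * chicov k x * chicov l x.

End Geometry.

Definition smooth_on (a c : Rbar) (f : R -> R) : Prop :=
  forall n r, inI a c r -> ex_derive_n f n r.

(* Main.v *)
Require Import Defs.
From Stdlib Require Import Reals Lra Lia.
From Coquelicot Require Import Coquelicot.
Open Scope R_scope.

Ltac etafix := repeat match goal with |- context [Derive (fun y => ?f y)] => change (Derive (fun y => f y)) with (Derive f) end.

Section S.
Variables b f1 f2 A B C : R -> R.

Definition dg (i j l : nat) (x : Point) : R :=
  let r := x 1%nat in
  match i, j, l with
  | 1%nat, 0%nat, 0%nat => - (2 * b r * Derive b r)
  | 1%nat, 1%nat, 1%nat => 2 * f1 r * Derive f1 r
  | 1%nat, 2%nat, 2%nat => 2 * f2 r * Derive f2 r
  | 1%nat, 3%nat, 3%nat => 2 * f2 r * Derive f2 r * sin (x 2%nat) ^ 2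
  | 2%nat, 3%nat, 3%nat => f2 r ^ 2 * (2 * sin (x 2%nat) * cos (x 2%nat))
  | _, _, _ => 0
  end.

Ltac dtac := apply is_derive_unique; auto_derive; [repeat split; auto | ring].

Lemma partial_gmet x : ex_derive b (x 1%nat) -> ex_derive f1 (x 1%nat) -> ex_derive f2 (x 1%nat) ->
  forall i j l, partial i (gmet b f1 f2 j l) x = dg i j l x.
Proof.
intros Hb Hf1 Hf2 i j l; unfold partial, gmet, dg, upd.
destruct i as [|[|[|i]]]; destruct j as [|[|[|[|j]]]]; destruct l as [|[|[|[|l]]]]; cbn [Nat.eqb];
 try destruct (Nat.eqb j l).
all: apply is_derive_unique; auto_derive.
all: try (repeat split; auto; fail).
all: repeat match goal with |- context [Derive (fun y => ?f y)] => change (Derive (fun y => f y)) with (Derive f) end.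
all: ring.
Qed.

Definition dK (i k l : nat) (x : Point) : R :=
  let r := x 1%nat in
  match i, k, l with
  | 1%nat, 0%nat, 0%nat => Derive A r * b r ^ 2 + A r * (2 * b r * Derive b r) - (Derive B r * b r ^ 2 + B r * (2 * b r * Derive b r))
  | 1%nat, 1%nat, 1%nat => (Derive B r + Derive C r) * f1 r ^ 2 + (B r + C r) * (2 * f1 r * Derive f1 r)
  | 1%nat, 2%nat, 2%nat => Derive B r * f2 r ^ 2 + B r * (2 * f2 r * Derive f2 r)
  | 1%nat, 3%nat, 3%nat => (Derive B r * f2 r ^ 2 + B r * (2 * f2 r * Derive f2 r)) * sin (x 2%nat) ^ 2
  | 2%nat, 3%nat, 3%nat => B r * f2 r ^ 2 * (2 * sin (x 2%nat) * cos (x 2%nat))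
  | _, _, _ => 0
  end.


Lemma partial_K x : ex_derive b (x 1%nat) -> ex_derive f1 (x 1%nat) -> ex_derive f2 (x 1%nat) ->
  ex_derive A (x 1%nat) -> ex_derive B (x 1%nat) -> ex_derive C (x 1%nat) ->
  forall i k l, partial i (Ktensor b f1 f2 A B C k l) x = dK i k l x.
Proof.
intros Hb Hf1 Hf2 HA HB HC i k l; unfold partial, Ktensor, ucov, chicov, gmet, dK, upd.
destruct i as [|[|[|i]]]; destruct k as [|[|[|[|k]]]]; destruct l as [|[|[|[|l]]]]; cbn [Nat.eqb];
 try destruct (Nat.eqb k l).
all: apply is_derive_unique; auto_derive.
all: try (repeat split; auto; fail).
all: etafix; ring.
Qed.

Definition dT (j : nat) (x : Point) : R :=
  match j with 1%nat => - Derive A (x 1%nat) + 4 * Derive B (x 1%nat) + Derive C (x 1%nat) | _ => 0 end.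

Lemma partial_trK x : ex_derive b (x 1%nat) -> ex_derive f1 (x 1%nat) -> ex_derive f2 (x 1%nat) ->
  ex_derive A (x 1%nat) -> ex_derive B (x 1%nat) -> ex_derive C (x 1%nat) ->
  b (x 1%nat) <> 0 -> f1 (x 1%nat) <> 0 -> f2 (x 1%nat) <> 0 -> sin (x 2%nat) <> 0 ->
  forall j, partial j (trK b f1 f2 (Ktensor b f1 f2 A B C)) x = dT j x.
Proof.
intros Hb Hf1 Hf2 HA HB HC Hb0 Hf10 Hf20 Hs0 j; unfold partial, trK, sum4, Ktensor, ucov, chicov, gmet, ginv, dT, upd.
destruct j as [|[|[|j]]]; cbn [Nat.eqb].
all: apply is_derive_unique; auto_derive.
all: try (repeat split; auto; fail).
all: try (repeat split; first [assumption | repeat apply Rmult_integral_contrapositive_currified; auto using R1_neq_R0]; fail).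
all: etafix; field; auto.
Qed.

Lemma rev_point x k1 k2 k3 :
  ex_derive b (x 1%nat) -> ex_derive f1 (x 1%nat) -> ex_derive f2 (x 1%nat) ->
  ex_derive A (x 1%nat) -> ex_derive B (x 1%nat) -> ex_derive C (x 1%nat) ->
  b (x 1%nat) <> 0 -> f1 (x 1%nat) <> 0 -> f2 (x 1%nat) <> 0 -> sin (x 2%nat) <> 0 ->
  A (x 1%nat) = k2 * (f2 (x 1%nat)) ^ 2 - 2 * k3 * (b (x 1%nat)) ^ 2 ->
  B (x 1%nat) = k1 + 2 * k2 * (f2 (x 1%nat)) ^ 2 + k3 * (b (x 1%nat)) ^ 2 ->
  C (x 1%nat) = - k2 * (f2 (x 1%nat)) ^ 2 ->
  Derive A (x 1%nat) = k2 * (2 * f2 (x 1%nat) * Derive f2 (x 1%nat)) - 2 * k3 * (2 * b (x 1%nat) * Derive b (x 1%nat)) ->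
  Derive B (x 1%nat) = 2 * k2 * (2 * f2 (x 1%nat) * Derive f2 (x 1%nat)) + k3 * (2 * b (x 1%nat) * Derive b (x 1%nat)) ->
  Derive C (x 1%nat) = - k2 * (2 * f2 (x 1%nat) * Derive f2 (x 1%nat)) ->
  forall j k l, (j < 4)%nat -> (k < 4)%nat -> (l < 4)%nat ->
    covD b f1 f2 (Ktensor b f1 f2 A B C) j k l x + covD b f1 f2 (Ktensor b f1 f2 A B C) k j l x + covD b f1 f2 (Ktensor b f1 f2 A B C) l j k x =
    / 6 * (gmet b f1 f2 k l x * partial j (trK b f1 f2 (Ktensor b f1 f2 A B C)) x + gmet b f1 f2 j l x * partial k (trK b f1 f2 (Ktensor b f1 f2 A B C)) x
           + gmet b f1 f2 j k x * partial l (trK b f1 f2 (Ktensor b f1 f2 A B C)) x).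
Proof.
intros Hb Hf1 Hf2 HA HB HC Hb0 Hf10 Hf20 Hs0 eA eB eC dA dB dC j k l Hj Hk Hl.
unfold covD, Gam, sum4.
rewrite !(partial_trK x) by auto.
rewrite !(partial_K x) by auto.
rewrite !(partial_gmet x) by auto.
destruct j as [|[|[|[|j]]]]; try lia; destruct k as [|[|[|[|k]]]]; try lia; destruct l as [|[|[|[|l]]]]; try lia;
 unfold dg, dK, dT, Ktensor, gmet, ginv, ucov, chicov; cbn [Nat.eqb];
 rewrite ?eA, ?eB, ?eC, ?dA, ?dB, ?dC.
all: field; auto.
Qed.

Lemma rev_div x k1 k2 k3 :
  ex_derive b (x 1%nat) -> ex_derive f1 (x 1%nat) -> ex_derive f2 (x 1%nat) ->
  ex_derive A (x 1%nat) -> ex_derive B (x 1%nat) -> ex_derive C (x 1%nat) ->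
  b (x 1%nat) <> 0 -> f1 (x 1%nat) <> 0 -> f2 (x 1%nat) <> 0 -> sin (x 2%nat) <> 0 ->
  A (x 1%nat) = k2 * (f2 (x 1%nat)) ^ 2 - 2 * k3 * (b (x 1%nat)) ^ 2 ->
  B (x 1%nat) = k1 + 2 * k2 * (f2 (x 1%nat)) ^ 2 + k3 * (b (x 1%nat)) ^ 2 ->
  C (x 1%nat) = - k2 * (f2 (x 1%nat)) ^ 2 ->
  Derive A (x 1%nat) = k2 * (2 * f2 (x 1%nat) * Derive f2 (x 1%nat)) - 2 * k3 * (2 * b (x 1%nat) * Derive b (x 1%nat)) ->
  Derive B (x 1%nat) = 2 * k2 * (2 * f2 (x 1%nat) * Derive f2 (x 1%nat)) + k3 * (2 * b (x 1%nat) * Derive b (x 1%nat)) ->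
  Derive C (x 1%nat) = - k2 * (2 * f2 (x 1%nat) * Derive f2 (x 1%nat)) ->
  forall l, (l < 4)%nat ->
    sum4 (fun k => sum4 (fun j => ginv b f1 f2 j k x * covD b f1 f2 (Ktensor b f1 f2 A B C) j k l x)) = 0.
Proof.
intros Hb Hf1 Hf2 HA HB HC Hb0 Hf10 Hf20 Hs0 eA eB eC dA dB dC l Hl.
unfold covD, Gam, sum4.
rewrite !(partial_K x) by auto.
rewrite !(partial_gmet x) by auto.
destruct l as [|[|[|[|l]]]]; try lia;
 unfold dg, dK, Ktensor, gmet, ginv, ucov, chicov; cbn [Nat.eqb];
 rewrite ?eA, ?eB, ?eC, ?dA, ?dB, ?dC.
all: field; auto.
Qed.

Lemma fwd_point x :
  ex_derive b (x 1%nat) -> ex_derive f1 (x 1%nat) -> ex_derive f2 (x 1%nat) ->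
  ex_derive A (x 1%nat) -> ex_derive B (x 1%nat) -> ex_derive C (x 1%nat) ->
  b (x 1%nat) <> 0 -> f1 (x 1%nat) <> 0 -> f2 (x 1%nat) <> 0 -> sin (x 2%nat) <> 0 ->
  (forall j k l, (j < 4)%nat -> (k < 4)%nat -> (l < 4)%nat ->
    covD b f1 f2 (Ktensor b f1 f2 A B C) j k l x + covD b f1 f2 (Ktensor b f1 f2 A B C) k j l x + covD b f1 f2 (Ktensor b f1 f2 A B C) l j k x =
    / 6 * (gmet b f1 f2 k l x * partial j (trK b f1 f2 (Ktensor b f1 f2 A B C)) x + gmet b f1 f2 j l x * partial k (trK b f1 f2 (Ktensor b f1 f2 A B C)) x
           + gmet b f1 f2 j k x * partial l (trK b f1 f2 (Ktensor b f1 f2 A B C)) x)) ->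
  let r := x 1%nat in
  (- Derive A r - Derive C r + 2 * (A r + C r) * Derive b r / b r = 0) /\ (- Derive C r + 2 * C r * Derive f2 r / f2 r = 0) /\ (2 * Derive B r + Derive A r + 5 * Derive C r = 0).
Proof.
intros Hb Hf1 Hf2 HA HB HC Hb0 Hf10 Hf20 Hs0 H; cbv zeta.
assert (E1 := H 1%nat 1%nat 1%nat ltac:(lia) ltac:(lia) ltac:(lia)).
assert (E2 := H 1%nat 0%nat 0%nat ltac:(lia) ltac:(lia) ltac:(lia)).
assert (E3 := H 1%nat 2%nat 2%nat ltac:(lia) ltac:(lia) ltac:(lia)).
clear H.
unfold covD, Gam, sum4 in E1, E2, E3.
rewrite !(partial_trK x) in E1 by auto. rewrite !(partial_trK x) in E2 by auto. rewrite !(partial_trK x) in E3 by auto.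
rewrite !(partial_K x) in E1 by auto. rewrite !(partial_K x) in E2 by auto. rewrite !(partial_K x) in E3 by auto.
rewrite !(partial_gmet x) in E1 by auto. rewrite !(partial_gmet x) in E2 by auto. rewrite !(partial_gmet x) in E3 by auto.
unfold dg, dK, dT, Ktensor, gmet, ginv, ucov, chicov in E1, E2, E3; cbn [Nat.eqb] in E1, E2, E3.
apply Rminus_diag_eq in E1, E2, E3.
match type of E1 with ?L1 = 0 => match type of E2 with ?L2 = 0 => match type of E3 with ?L3 = 0 =>
split; [|split];
[ replace (- Derive A (x 1%nat) - Derive C (x 1%nat) + 2 * (A (x 1%nat) + C (x 1%nat)) * Derive b (x 1%nat) / b (x 1%nat)) with (-L2 / b (x 1%nat) ^ 2 - L1 / (3 * f1 (x 1%nat) ^ 2)) by (field; auto)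
| replace (- Derive C (x 1%nat) + 2 * C (x 1%nat) * Derive f2 (x 1%nat) / f2 (x 1%nat)) with (L3 / f2 (x 1%nat) ^ 2 - L1 / (3 * f1 (x 1%nat) ^ 2)) by (field; auto)
| replace (2 * Derive B (x 1%nat) + Derive A (x 1%nat) + 5 * Derive C (x 1%nat)) with (L1 * 2 / f1 (x 1%nat) ^ 2) by (field; auto) ]
end end end; rewrite ?E1, ?E2, ?E3; field; auto.
Qed.
End S.


Lemma inI_loc a c r : inI a c r -> locally r (inI a c).
Proof. intros H. exact (open_and _ _ (open_Rbar_gt a) (open_Rbar_lt c) r H). Qed.

Lemma inI_conv a c r s t : inI a c r -> inI a c s -> Rmin r s <= t <= Rmax r s -> inI a c t.
Proof.
unfold inI; intros [H1 H2] [H3 H4] [H5 H6].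
split.
- destruct a as [a| |]; simpl in *; auto.
  apply Rlt_le_trans with (Rmin r s); auto. apply Rmin_glb_lt; auto.
- destruct c as [c| |]; simpl in *; auto.
  apply Rle_lt_trans with (Rmax r s); auto. apply Rmax_lub_lt; auto.
Qed.

Lemma const_on a c g : (forall r, inI a c r -> is_derive g r 0) ->
  forall r s, inI a c r -> inI a c s -> g r = g s.
Proof.
intros H r s Hr Hs.
destruct (MVT_gen g s r (fun _ => 0)) as [z [_ E]].
- intros t Ht. apply H. apply (inI_conv a c s r t); auto. lra.
- intros t Ht. apply continuity_pt_filterlim.
  assert (Ed : ex_derive g t) by (exists 0; apply H; apply (inI_conv a c s r t); auto).
  exact (ex_derive_continuous g t Ed).
- lra.
Qed.

Lemma ex_point a c : Rbar_lt a c -> exists r, inI a c r.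
Proof.
unfold inI; destruct a as [a| |]; destruct c as [c| |]; simpl; intros H; try contradiction.
- exists ((a + c) / 2); lra.
- exists (a + 1); lra.
- exists (c - 1); lra.
- exists 0; auto.
Qed.

Lemma smooth_ex a c f r : smooth_on a c f -> inI a c r -> ex_derive f r.
Proof. intros H Hr. exact (H 1%nat r Hr). Qed.

Theorem theorem1 (a c : Rbar) (b f1 f2 A B C : R -> R)
  (Hac : Rbar_lt a c)
  (Hb : smooth_on a c b) (Hf1 : smooth_on a c f1) (Hf2 : smooth_on a c f2)
  (HA : smooth_on a c A) (HB : smooth_on a c B) (HC : smooth_on a c C)
  (Hpos : forall r, inI a c r -> 0 < b r /\ 0 < f1 r /\ 0 < f2 r) :
  (conformal_Killing b f1 f2 a c (Ktensor b f1 f2 A B C) /\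
   divergence_free b f1 f2 a c (Ktensor b f1 f2 A B C))
  <->
  exists k1 k2 k3 : R, forall r, inI a c r ->
    A r = k2 * (f2 r) ^ 2 - 2 * k3 * (b r) ^ 2 /\
    B r = k1 + 2 * k2 * (f2 r) ^ 2 + k3 * (b r) ^ 2 /\
    C r = - k2 * (f2 r) ^ 2.
Proof.
split.
- intros [HCK _].
  destruct (ex_point a c Hac) as [r0 Hr0].
  assert (Hrel : forall r, inI a c r ->
    (- Derive A r - Derive C r + 2 * (A r + C r) * Derive b r / b r = 0) /\
    (- Derive C r + 2 * C r * Derive f2 r / f2 r = 0) /\
    (2 * Derive B r + Derive A r + 5 * Derive C r = 0)).
  { intros r Hr.
    pose (xr := fun i : nat => match i with 1%nat => r | 2%nat => PI / 2 | _ => 0 end).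
    assert (Hx : inU a c xr).
    { split; [exact Hr|]. simpl. pose proof PI_RGT_0. lra. }
    destruct (Hpos r Hr) as [P1 [P2 P3]].
    exact (fwd_point b f1 f2 A B C xr
      (smooth_ex a c b r Hb Hr) (smooth_ex a c f1 r Hf1 Hr) (smooth_ex a c f2 r Hf2 Hr)
      (smooth_ex a c A r HA Hr) (smooth_ex a c B r HB Hr) (smooth_ex a c C r HC Hr)
      ltac:(simpl; lra) ltac:(simpl; lra) ltac:(simpl; lra)
      ltac:(simpl; rewrite sin_PI2; lra) (HCK xr Hx)). }
  pose (g1 := fun r => (A r + C r) / b r ^ 2).
  pose (g2 := fun r => C r / f2 r ^ 2).
  pose (g3 := fun r => B r + A r / 2 + 5 * C r / 2).
  assert (D1 : forall r, inI a c r -> is_derive g1 r 0).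
  { intros r Hr. destruct (Hpos r Hr) as [P1 [P2 P3]].
    destruct (Hrel r Hr) as [R1 [R2 R3]].
    pose proof (smooth_ex a c b r Hb Hr). pose proof (smooth_ex a c A r HA Hr).
    pose proof (smooth_ex a c C r HC Hr).
    unfold g1. auto_derive.
    - repeat split; auto; apply Rgt_not_eq; repeat apply Rmult_lt_0_compat; lra.
    - etafix. replace 0 with (- (- Derive A r - Derive C r + 2 * (A r + C r) * Derive b r / b r) / b r ^ 2) by (rewrite R1; field; lra).
      field; lra. }
  assert (D2 : forall r, inI a c r -> is_derive g2 r 0).
  { intros r Hr. destruct (Hpos r Hr) as [P1 [P2 P3]].
    destruct (Hrel r Hr) as [R1 [R2 R3]].
    pose proof (smooth_ex a c f2 r Hf2 Hr).
    pose proof (smooth_ex a c C r HC Hr).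
    unfold g2. auto_derive.
    - repeat split; auto; apply Rgt_not_eq; repeat apply Rmult_lt_0_compat; lra.
    - etafix. replace 0 with (- (- Derive C r + 2 * C r * Derive f2 r / f2 r) / f2 r ^ 2) by (rewrite R2; field; lra).
      field; lra. }
  assert (D3 : forall r, inI a c r -> is_derive g3 r 0).
  { intros r Hr.
    destruct (Hrel r Hr) as [R1 [R2 R3]].
    pose proof (smooth_ex a c A r HA Hr). pose proof (smooth_ex a c B r HB Hr).
    pose proof (smooth_ex a c C r HC Hr).
    unfold g3. auto_derive.
    - repeat split; auto.
    - etafix. lra. }
  exists (g3 r0), (- g2 r0), (- g1 r0 / 2).
  intros r Hr.
  rewrite <- (const_on a c g1 D1 r r0 Hr Hr0), <- (const_on a c g2 D2 r r0 Hr Hr0),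
    <- (const_on a c g3 D3 r r0 Hr Hr0).
  destruct (Hpos r Hr) as [P1 [P2 P3]].
  unfold g1, g2, g3.
  split; [|split]; field; lra.
- intros [k1 [k2 [k3 H]]].
  assert (Hpt : forall x, inU a c x ->
    let r := x 1%nat in
    ex_derive b r /\ ex_derive f1 r /\ ex_derive f2 r /\ ex_derive A r /\ ex_derive B r /\ ex_derive C r /\
    b r <> 0 /\ f1 r <> 0 /\ f2 r <> 0 /\ sin (x 2%nat) <> 0 /\
    A r = k2 * (f2 r) ^ 2 - 2 * k3 * (b r) ^ 2 /\
    B r = k1 + 2 * k2 * (f2 r) ^ 2 + k3 * (b r) ^ 2 /\
    C r = - k2 * (f2 r) ^ 2 /\
    Derive A r = k2 * (2 * f2 r * Derive f2 r) - 2 * k3 * (2 * b r * Derive b r) /\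
    Derive B r = 2 * k2 * (2 * f2 r * Derive f2 r) + k3 * (2 * b r * Derive b r) /\
    Derive C r = - k2 * (2 * f2 r * Derive f2 r)).
  { intros x [Hr Hth] r.
    destruct (Hpos r Hr) as [P1 [P2 P3]].
    pose proof (smooth_ex a c b r Hb Hr). pose proof (smooth_ex a c f2 r Hf2 Hr).
    destruct (H r Hr) as [eA [eB eC]].
    assert (Hloc := inI_loc a c r Hr).
    split; [exact (smooth_ex a c b r Hb Hr)|].
    split; [exact (smooth_ex a c f1 r Hf1 Hr)|].
    split; [exact (smooth_ex a c f2 r Hf2 Hr)|].
    split; [exact (smooth_ex a c A r HA Hr)|].
    split; [exact (smooth_ex a c B r HB Hr)|].
    split; [exact (smooth_ex a c C r HC Hr)|].
    split; [lra|]. split; [lra|]. split; [lra|].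
    split; [apply Rgt_not_eq, sin_gt_0; lra|].
    split; [exact eA|]. split; [exact eB|]. split; [exact eC|].
    split; [|split].
    - apply is_derive_unique.
      apply (is_derive_ext_loc (fun s => k2 * f2 s ^ 2 - 2 * k3 * b s ^ 2)).
      { apply filter_imp with (2 := Hloc). intros t Ht. symmetry. apply (H t Ht). }
      auto_derive; [repeat split; auto|]. etafix. ring.
    - apply is_derive_unique.
      apply (is_derive_ext_loc (fun s => k1 + 2 * k2 * f2 s ^ 2 + k3 * b s ^ 2)).
      { apply filter_imp with (2 := Hloc). intros t Ht. symmetry. apply (H t Ht). }
      auto_derive; [repeat split; auto|]. etafix. ring.
    - apply is_derive_unique.
      apply (is_derive_ext_loc (fun s => - k2 * f2 s ^ 2)).
      { apply filter_imp with (2 := Hloc). intros t Ht. symmetry. apply (H t Ht). }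
      auto_derive; [repeat split; auto|]. etafix. ring. }
  split.
  + intros x Hx.
    destruct (Hpt x Hx) as (h1 & h2 & h3 & h4 & h5 & h6 & h7 & h8 & h9 & h10 & h11 & h12 & h13 & h14 & h15 & h16).
    exact (rev_point b f1 f2 A B C x k1 k2 k3 h1 h2 h3 h4 h5 h6 h7 h8 h9 h10 h11 h12 h13 h14 h15 h16).
  + intros x Hx.
    destruct (Hpt x Hx) as (h1 & h2 & h3 & h4 & h5 & h6 & h7 & h8 & h9 & h10 & h11 & h12 & h13 & h14 & h15 & h16).
    exact (rev_div b f1 f2 A B C x k1 k2 k3 h1 h2 h3 h4 h5 h6 h7 h8 h9 h10 h11 h12 h13 h14 h15 h16).
Qed.
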